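(* Let $\{a_n\}_{n\ge0}$ be a real-valued sequence with $\{a_n\}\in GMS$. The following are equivalent: (i) The series $\sum_{n=0}^\infty a_n$ converges. (ii) The partial sums $\sum_{n=0}^N a_n\cos(nx)$ converge uniformly in $x\in\mathbb{R}$ as $N\to\infty$. (iii) The series $\sum_{n=0}^\infty a_n\cos(nx)$ converges for every $x\in\mathbb{R}$ and its sum is a bounded function of $x$.
   Context: A complex sequence $\{a_n\}_{n\ge0}$ tending to $0$ is general monotone, written $\{a_n\}\in GMS$, if there exist constants $C>1$ and $\lambda>1$ such that for every $n\in\mathbb{N}$, $$\sum_{k=n}^{2n}|a_k-a_{k+1}|\le C\sum_{n/\lambda\le k\le\lambda n}\frac{|a_k|}{k}.$$ *)

(* Defs.v *)
From Stdlib Require Import Reals Lra Lia ZArith.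
From Coquelicot Require Import Coquelicot.
Open Scope R_scope.

Definition gms_rhs_term (a : nat -> R) (lam : R) (n k : nat) : R :=
  if Rle_dec (INR n / lam) (INR k) then
    if Rle_dec (INR k) (lam * INR n) then Rabs (a k) / INR k else 0
  else 0.

(* The right-hand sum ranges over k = 0 .. up(lam*n) with the indicator,
   which covers all integers k <= lam*n. *)
Definition GMS (a : nat -> R) : Prop :=
  is_lim_seq a 0 /\
  exists C lam : R, 1 < C /\ 1 < lam /\
    forall n : nat, (1 <= n)%nat ->
      sum_f_R0 (fun j => Rabs (a (n + j)%nat - a (n + j + 1)%nat)) n
      <= C * sum_f_R0 (gms_rhs_term a lam n) (Z.to_nat (up (lam * INR n))).

Definition cos_partial (a : nat -> R) (N : nat) (x : R) : R :=
  sum_f_R0 (fun n => a n * cos (INR n * x)) N.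

(* Main.v *)
Require Import Defs.
From Stdlib Require Import Reals Lra Lia ZArith Psatz.
From Coquelicot Require Import Coquelicot.
Open Scope R_scope.


Fixpoint ssum (f : nat -> R) (n : nat) : R :=
  match n with O => 0 | S n => ssum f n + f n end.

Lemma ssum_ext f g n : (forall i, (i < n)%nat -> f i = g i) -> ssum f n = ssum g n.
Proof. induction n; intros H; simpl; auto. rewrite IHn by (intros; apply H; lia). rewrite H by lia; auto. Qed.

Lemma ssum_le f g n : (forall i, (i < n)%nat -> f i <= g i) -> ssum f n <= ssum g n.
Proof. induction n; intros H; simpl; [lra|]. assert (ssum f n <= ssum g n) by (apply IHn; intros; apply H; lia).
 assert (f n <= g n) by (apply H; lia). lra. Qed.

Lemma ssum_nonneg f n : (forall i, (i<n)%nat -> 0 <= f i) -> 0 <= ssum f n.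
Proof. intros H. replace 0 with (ssum (fun _ => 0) n). apply ssum_le; auto.
 clear H; induction n; simpl; auto; rewrite IHn; ring. Qed.

Lemma ssum_abs f n : Rabs (ssum f n) <= ssum (fun i => Rabs (f i)) n.
Proof. induction n; simpl. rewrite Rabs_R0; lra. eapply Rle_trans. apply Rabs_triang. lra. Qed.

Lemma ssum_split f n k : ssum f (n + k) = ssum f n + ssum (fun i => f (n+i)%nat) k.
Proof. induction k; simpl. rewrite Nat.add_0_r; ring. rewrite Nat.add_succ_r; simpl. rewrite IHk; ring. Qed.

Lemma ssum_mono f n m : (forall i, 0 <= f i) -> (n <= m)%nat -> ssum f n <= ssum f m.
Proof. intros H Hnm. replace m with (n + (m - n))%nat by lia. rewrite ssum_split.
 assert (0 <= ssum (fun i => f (n+i)%nat) (m-n)) by (apply ssum_nonneg; auto). lra. Qed.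

Lemma ssum_scal c f n : ssum (fun i => c * f i) n = c * ssum f n.
Proof. induction n; simpl. ring. rewrite IHn; ring. Qed.

Lemma ssum_plus f g n : ssum (fun i => f i + g i) n = ssum f n + ssum g n.
Proof. induction n; simpl. ring. rewrite IHn; ring. Qed.

Lemma ssum_minus f g n : ssum (fun i => f i - g i) n = ssum f n - ssum g n.
Proof. induction n; simpl. ring. rewrite IHn; ring. Qed.

Lemma ssum_const c n : ssum (fun _ => c) n = INR n * c.
Proof. induction n; simpl ssum. simpl; ring. rewrite IHn, S_INR; ring. Qed.

Lemma ssum_sumf f n : ssum f (S n) = sum_f_R0 f n.
Proof. induction n; simpl. ring. simpl in IHn. rewrite <- IHn. ring. Qed.

Lemma Rabs_sub_le a b : Rabs (a - b) <= Rabs a + Rabs b.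
Proof. unfold Rminus. eapply Rle_trans. apply Rabs_triang. rewrite Rabs_Ropp; lra. Qed.

Lemma abel_id u b L : ssum (fun m => u m * b m) (S L) =
  ssum u (S L) * b L - ssum (fun m => ssum u (S m) * (b (S m) - b m)) L.
Proof. induction L. simpl; ring.
  change (ssum (fun m => u m * b m) (S (S L))) with (ssum (fun m => u m * b m) (S L) + u (S L) * b (S L)).
  rewrite IHL. change (ssum (fun m => ssum u (S m) * (b (S m) - b m)) (S L)) with
    (ssum (fun m => ssum u (S m) * (b (S m) - b m)) L + ssum u (S L) * (b (S L) - b L)).
  change (ssum u (S (S L))) with (ssum u (S L) + u (S L)). ring. Qed.

Lemma abel_bound u b L E : (forall t, (t <= L)%nat -> Rabs (ssum u (S t)) <= E) ->
  Rabs (ssum (fun m => u m * b m) (S L)) <= E * (Rabs (b L) + ssum (fun m => Rabs (b (S m) - b m)) L).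
Proof. intros H. assert (HE : 0 <= E) by (eapply Rle_trans; [apply Rabs_pos| apply (H 0%nat); lia]).
 rewrite abel_id. eapply Rle_trans. apply Rabs_sub_le.
 rewrite Rabs_mult.
 assert (H1 : Rabs (ssum u (S L)) * Rabs (b L) <= E * Rabs (b L)) by
   (apply Rmult_le_compat_r; [apply Rabs_pos| apply H; lia]).
 assert (H2 : Rabs (ssum (fun m => ssum u (S m) * (b (S m) - b m)) L) <=
            E * ssum (fun m => Rabs (b (S m) - b m)) L).
 { eapply Rle_trans. apply ssum_abs. rewrite <- ssum_scal. apply ssum_le. intros i Hi.
   rewrite Rabs_mult. apply Rmult_le_compat_r. apply Rabs_pos. apply H; lia. }
 lra. Qed.

Lemma diff_le_var b L m : (m <= L)%nat -> Rabs (b L - b m) <= ssum (fun i => Rabs (b (S i) - b i)) L.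
Proof. induction L; intros Hm. replace m with 0%nat by lia. simpl. rewrite Rminus_diag, Rabs_R0; lra.
 destruct (Nat.eq_dec m (S L)). subst. rewrite Rminus_diag, Rabs_R0. apply ssum_nonneg; intros; apply Rabs_pos.
 simpl. specialize (IHL ltac:(lia)).
 replace (b (S L) - b m) with ((b (S L) - b L) + (b L - b m)) by ring.
 eapply Rle_trans. apply Rabs_triang. lra. Qed.

Lemma cs_sum x n : (ssum x n)^2 <= INR n * ssum (fun i => x i ^ 2) n.
Proof. induction n. simpl ssum; simpl INR; nra.
 change (ssum x (S n)) with (ssum x n + x n).
 change (ssum (fun i => x i ^ 2) (S n)) with (ssum (fun i => x i ^ 2) n + x n ^ 2). rewrite S_INR.
 set (S0 := ssum x n) in *. set (Q := ssum (fun i => x i ^2) n) in *.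
 assert (HQ : 0 <= Q) by (apply ssum_nonneg; intros; apply pow2_ge_0).
 assert (Hn := pos_INR n).
 assert (2 * S0 * x n <= Q + INR n * x n ^ 2).
 { destruct (Req_dec (INR n) 0) as [E|E].
   - rewrite E in IHn. assert (S0 = 0) by nra. subst; nra.
   - assert (0 <= (S0 - INR n * x n)^2) by apply pow2_ge_0.
     assert (INR n * (Q + INR n * x n ^ 2 - 2 * S0 * x n) >= 0) by nra.
     assert (0 < INR n) by lra. nra. }
 nra. Qed.

Lemma dirichlet_id x q t : 2 * sin (x/2) * ssum (fun i => cos (INR (q+i) * x)) t =
  sin (INR (q+t) * x - x/2) - sin (INR q * x - x/2).
Proof. induction t. cbn [ssum]. rewrite Nat.add_0_r, Rminus_diag; ring.
 simpl ssum. rewrite Rmult_plus_distr_l, IHt.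
 replace (INR (q + S t) * x - x/2) with (INR (q+t) * x + x/2) . 2:{ rewrite Nat.add_succ_r, S_INR. lra. }
 rewrite sin_plus, sin_minus. ring. Qed.

Lemma dirichlet x q t : 0 < Rabs (sin (x/2)) ->
  Rabs (ssum (fun i => cos (INR (q+i) * x)) t) <= / Rabs (sin (x/2)).
Proof. intros Hs. assert (H := dirichlet_id x q t).
 assert (Rabs (2 * sin (x/2) * ssum (fun i => cos (INR (q+i) * x)) t) <= 2).
 { rewrite H. eapply Rle_trans. apply Rabs_sub_le.
   assert (Rabs (sin (INR (q + t) * x - x / 2)) <= 1) by apply Rabs_le, SIN_bound.
   assert (Rabs (sin (INR q * x - x / 2)) <= 1) by apply Rabs_le, SIN_bound. lra. }
 rewrite !Rabs_mult, (Rabs_right 2) in H0 by lra.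
 apply (Rmult_le_reg_l (Rabs (sin (x/2)))); auto. rewrite Rinv_r by lra. lra. Qed.

Lemma cos_step x k : Rabs (cos (INR (S k) * x) - cos (INR k * x)) <= 2 * Rabs (sin (x/2)).
Proof. replace (INR (S k) * x) with ((INR k * x + x/2) + x/2) by (rewrite S_INR; lra).
 replace (INR k * x) with ((INR k * x + x/2) - x/2) at 2 by ring.
 rewrite cos_plus, cos_minus. replace (_ - _) with (-2 * sin (INR k * x + x/2) * sin (x/2)) by ring.
 rewrite !Rabs_mult. rewrite Rabs_left by lra.
 assert (Rabs (sin (INR k * x + x/2)) <= 1) by apply Rabs_le, SIN_bound.
 assert (0 <= Rabs (sin (x/2))) by apply Rabs_pos. nra. Qed.


Lemma lim_of_eps (u : nat -> R) l : (forall eps, 0 < eps -> exists N0, forall N, (N0 <= N)%nat -> Rabs (u N - l) < eps) ->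
  is_lim_seq u l.
Proof. intros H. apply is_lim_seq_spec. intros [e He]. destruct (H e He) as [N0 HN]. exists N0. intros n Hn. apply HN; auto. Qed.

Lemma ssum_diff f n m : (m <= n)%nat -> ssum f n - ssum f m = ssum (fun i => f (m+i)%nat) (n - m).
Proof. intros H. replace n with (m + (n-m))%nat at 1 by lia. rewrite ssum_split. replace (m + (n-m) - m)%nat with (n-m)%nat by lia. ring. Qed.

Lemma from_UC (g : R -> nat -> R) :
  (forall eps, 0 < eps -> exists M, forall x p m, (M <= p)%nat -> Rabs (ssum (fun i => g x (p+i)%nat) m) <= eps) ->
  exists f : R -> R, forall eps, 0 < eps -> exists N0, forall N, (N0 <= N)%nat -> forall x,
     Rabs (ssum (g x) (S N) - f x) < eps.
Proof. intros H.
 assert (Hc : forall x, ex_finite_lim_seq (fun n => ssum (g x) n)).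
 { intros x. apply ex_lim_seq_cauchy_corr. intros [e He]. destruct (H (e/2) ltac:(lra)) as [M HM].
   exists M. intros n m Hn Hm. simpl. destruct (Nat.le_ge_cases m n).
   - rewrite ssum_diff by auto. specialize (HM x m (n-m)%nat Hm). lra.
   - rewrite <- Rabs_Ropp, Ropp_minus_distr, ssum_diff by auto. specialize (HM x n (m-n)%nat Hn). lra. }
 exists (fun x => real (Lim_seq (fun n => ssum (g x) n))).
 intros eps Heps. destruct (H (eps/2) ltac:(lra)) as [M HM]. exists M. intros N HN x.
 destruct (Hc x) as [l Hl]. rewrite (is_lim_seq_unique _ _ Hl). simpl.
 assert (Hl2 : is_lim_seq (fun n => Rabs (ssum (g x) (n + S N)%nat - ssum (g x) (S N))) (Rabs (l - ssum (g x) (S N)))).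
 { apply (is_lim_seq_abs _ (Finite (l - ssum (g x) (S N)))). apply is_lim_seq_minus'.
   apply (is_lim_seq_incr_n (fun n => ssum (g x) n) (S N) l). auto. apply is_lim_seq_const. }
 assert (Hb : forall n, Rabs (ssum (g x) (n + S N)%nat - ssum (g x) (S N)) <= eps/2).
 { intros n. rewrite ssum_diff by lia. apply HM. lia. }
 assert (Hle := is_lim_seq_le _ _ _ _ Hb Hl2 (is_lim_seq_const (eps/2))).
 simpl in Hle. rewrite <- Rabs_Ropp, Ropp_minus_distr. lra.
Qed.


Lemma ssum_term f n i : (forall k, 0 <= f k) -> (i < n)%nat -> f i <= ssum f n.
Proof. intros H Hi. replace n with (S i + (n - S i))%nat by lia. rewrite ssum_split.
 simpl. assert (0 <= ssum f i) by (apply ssum_nonneg; auto).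
 assert (0 <= ssum (fun k => f (S (i + k))) (n - S i)) by (apply ssum_nonneg; auto). lra. Qed.

Lemma CauchyA (a : nat -> R) : ex_series a -> forall eps, 0 < eps -> exists M, forall p m, (M <= p)%nat ->
  Rabs (ssum (fun i => a (p+i)%nat) m) <= eps.
Proof. intros [l Hl] eps He. change (is_lim_seq (sum_n a) l) in Hl. apply is_lim_seq_spec in Hl.
 destruct (Hl (mkposreal (eps/2) ltac:(lra))) as [N HN]. simpl in HN.
 exists (S N). intros p m Hp. replace (ssum (fun i => a (p+i)%nat) m) with (ssum a (p+m) - ssum a p)
   by (rewrite ssum_diff by lia; f_equal; lia).
 destruct p as [|p]; [lia|].
 assert (H1 := HN p ltac:(lia)). assert (H2 := HN (p+m)%nat ltac:(lia)).
 rewrite sum_n_Reals, <- ssum_sumf in H1, H2. replace (S p + m)%nat with (S (p+m)) by lia.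
 replace (ssum a (S (p+m)) - ssum a (S p)) with ((ssum a (S (p+m)) - l) - (ssum a (S p) - l)) by ring.
 eapply Rle_trans. apply Rabs_sub_le. lra. Qed.

Lemma bounded_seq (a : nat -> R) : is_lim_seq a 0 -> exists B, 0 < B /\ forall n, Rabs (a n) <= B.
Proof. intros Hl. apply is_lim_seq_spec in Hl. destruct (Hl (mkposreal 1 Rlt_0_1)) as [N HN]. simpl in HN.
 exists (1 + ssum (fun k => Rabs (a k)) N).
 assert (0 <= ssum (fun k => Rabs (a k)) N) by (apply ssum_nonneg; intros; apply Rabs_pos).
 split. lra. intros n. destruct (Nat.lt_ge_cases n N).
 - assert (Rabs (a n) <= ssum (fun k => Rabs (a k)) N) by (apply (ssum_term (fun k => Rabs (a k))); auto; intros; apply Rabs_pos). lra.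
 - specialize (HN n H0). rewrite Rminus_0_r in HN. lra. Qed.

Definition pw (j : nat) : nat := (2 ^ j)%nat.
Lemma INR_pw j : INR (pw j) = 2 ^ j.
Proof. unfold pw. rewrite pow_INR. replace (INR 2) with 2 by (simpl; lra). auto. Qed.
Lemma pw_pos j : (1 <= pw j)%nat.
Proof. unfold pw. assert (2 ^ 0 <= 2 ^ j)%nat by (apply Nat.pow_le_mono_r; lia). simpl in H. lia. Qed.
Lemma pw_gt j : (j < pw j)%nat.
Proof. apply Nat.pow_gt_lin_r. lia. Qed.
Lemma pw_S j : pw (S j) = (pw j + pw j)%nat.
Proof. unfold pw. rewrite Nat.pow_succ_r'. lia. Qed.
Lemma pw_mono i j : (i <= j)%nat -> (pw i <= pw j)%nat.
Proof. intros. apply Nat.pow_le_mono_r; lia. Qed.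
Lemma p2_pos j : 0 < 2 ^ j.
Proof. apply pow_lt; lra. Qed.

Definition yb (a : nat -> R) (j : nat) : R := ssum (fun i => Rabs (a (pw j + i)%nat)) (S (pw j)).
Definition Vb (a : nat -> R) (j : nat) : R := ssum (fun i => Rabs (a (pw j + i)%nat - a (S (pw j + i)))) (S (pw j)).

Lemma yb_nonneg a j : 0 <= yb a j.
Proof. apply ssum_nonneg; intros; apply Rabs_pos. Qed.
Lemma Vb_nonneg a j : 0 <= Vb a j.
Proof. apply ssum_nonneg; intros; apply Rabs_pos. Qed.

Lemma inv_INR_nonneg k : 0 <= / INR k.
Proof. destruct k. simpl. rewrite Rinv_0; lra. apply Rlt_le, Rinv_0_lt_compat, lt_0_INR; lia. Qed.

Lemma ssum_zero_beyond f B n : (forall k, 0 <= f k) -> (forall k, (B < k)%nat -> f k = 0) ->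
  ssum f n <= ssum f (S B).
Proof. intros H0 HB. destruct (Nat.le_gt_cases n (S B)). apply ssum_mono; auto.
 replace n with (S B + (n - S B))%nat by lia. rewrite ssum_split.
 rewrite (ssum_ext (fun i => f (S B + i)%nat) (fun _ => 0)). rewrite ssum_const, Rmult_0_r. lra. intros; apply HB; lia. Qed.

Lemma blocks g b r : (forall k, 0 <= g k) ->
  ssum (fun i => g (pw b + i)%nat) (S (pw (b + S r)) - pw b) <=
  ssum (fun i => ssum (fun m => g (pw (b+i) + m)%nat) (S (pw (b+i)))) (S r).
Proof. intros Hg. induction r.
 - rewrite Nat.add_1_r, pw_S. replace (S (pw b + pw b) - pw b)%nat with (S (pw b)) by lia.
   change (ssum ?F 1) with (0 + F 0%nat); cbv beta; rewrite Nat.add_0_r; lra.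
 - replace (S (pw (b + S (S r))) - pw b)%nat with ((S (pw (b + S r)) - pw b) + pw (b + S r))%nat.
   2:{ replace (b + S (S r))%nat with (S (b + S r)) by lia. rewrite pw_S. assert (H:= pw_mono b (b + S r) ltac:(lia)). lia. }
   rewrite ssum_split. change (ssum ?F (S (S r))) with (ssum F (S r) + F (S r)).
   apply Rplus_le_compat. exact IHr. cbv beta.
   replace (S (pw (b + S r))) with (1 + pw (b + S r))%nat by lia. rewrite ssum_split.
   assert (0 <= ssum (fun m => g (pw (b + S r) + m)%nat) 1) by (apply ssum_nonneg; auto).
   replace (ssum (fun i => g (pw b + (1 + pw (b + S r) - pw b + i))%nat) (pw (b + S r)))
     with (ssum (fun i => g (pw (b + S r) + (1 + i))%nat) (pw (b + S r))). lra.
   apply ssum_ext. intros i _. f_equal. assert (Hpw:= pw_mono b (b + S r) ltac:(lia)). lia.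
Qed.


Definition GMhyp (a : nat -> R) (C lam : R) := forall n : nat, (1 <= n)%nat ->
      sum_f_R0 (fun j => Rabs (a (n + j)%nat - a (n + j + 1)%nat)) n
      <= C * sum_f_R0 (gms_rhs_term a lam n) (Z.to_nat (up (lam * INR n))).

Lemma GMj a C lam K j : 0 < C -> 1 < lam -> lam <= 2^K -> (1 <= K)%nat -> (K <= j)%nat ->
  GMhyp a C lam ->
  Vb a j <= C * ssum (fun i => yb a (j-K+i) / 2^(j-K+i)) (2*K).
Proof. intros HC Hl HlK HK1 HKj HG.
 assert (Hn := pw_pos j). specialize (HG (pw j) Hn).
 replace (sum_f_R0 (fun j0 => Rabs (a (pw j + j0)%nat - a (pw j + j0 + 1)%nat)) (pw j)) with (Vb a j) in HG.
 2:{ unfold Vb. rewrite <- ssum_sumf. apply ssum_ext. intros i _. do 3 f_equal. lia. }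
 eapply Rle_trans. exact HG. apply Rmult_le_compat_l. lra.
 set (lo := pw (j-K)). set (hi := pw (j+K)).
 set (g := fun k => Rabs (a k) * / INR k).
 assert (Hg0 : forall k, 0 <= g k) by (intros; apply Rmult_le_pos; [apply Rabs_pos|apply inv_INR_nonneg]).
 set (h := fun k => if (lo <=? k)%nat then (if (k <=? hi)%nat then g k else 0) else 0).
 assert (Hh0 : forall k, 0 <= h k) by (intros k; unfold h; destruct (lo <=? k)%nat; [destruct (k <=? hi)%nat|]; auto; lra).
 assert (Hhg : forall k, h k <= g k) by (intros k; unfold h; destruct (lo <=? k)%nat; [destruct (k <=? hi)%nat|]; auto; lra).
 assert (H2j : 2 ^ j = 2 ^ (j-K) * 2 ^ K) by (rewrite <- pow_add; f_equal; lia).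
 assert (H2jK : 2 ^ (j+K) = 2 ^ j * 2 ^ K) by (rewrite <- pow_add; auto).
 assert (HP := p2_pos (j-K)). assert (HPK := p2_pos K).
 assert (Ht : forall k, gms_rhs_term a lam (pw j) k <= h k).
 { intros k. unfold gms_rhs_term. destruct (Rle_dec _ _) as [r1|]; [|apply Hh0].
   destruct (Rle_dec _ _) as [r2|]; [|apply Hh0].
   rewrite INR_pw in r1, r2.
   assert (Hlo : (lo <= k)%nat).
   { apply INR_le. unfold lo. rewrite INR_pw. eapply Rle_trans; [|exact r1].
     rewrite H2j. unfold Rdiv. rewrite Rmult_assoc. rewrite <- (Rmult_1_r (2 ^ (j-K))) at 1.
     apply Rmult_le_compat_l. lra. apply (Rmult_le_reg_r lam). lra. rewrite Rmult_assoc, Rinv_l by lra.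
     nra. }
   assert (Hhi : (k <= hi)%nat).
   { apply INR_le. unfold hi. rewrite INR_pw. eapply Rle_trans; [exact r2|].
     rewrite H2jK. assert (0 < 2^j) by apply p2_pos. nra. }
   unfold h. apply Nat.leb_le in Hlo, Hhi. rewrite Hlo, Hhi. unfold g. lra. }
 rewrite <- ssum_sumf. eapply Rle_trans. apply ssum_le. intros i _. apply Ht.
 eapply Rle_trans. apply (ssum_zero_beyond h hi); auto.
 { intros k Hk. unfold h. destruct (lo <=? k)%nat; auto. destruct (k <=? hi)%nat eqn:E; auto.
   apply Nat.leb_le in E; lia. }
 assert (Hlohi : (lo <= hi)%nat) by (apply pw_mono; lia).
 replace (S hi) with (lo + (S hi - lo))%nat by lia. rewrite ssum_split.
 rewrite (ssum_ext h (fun _ => 0)).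
 2:{ intros i Hi. unfold h. destruct (lo <=? i)%nat eqn:E; auto. apply Nat.leb_le in E; lia. }
 rewrite ssum_const, Rmult_0_r, Rplus_0_l.
 eapply Rle_trans. apply ssum_le. intros i _. apply (Hhg (lo + i)%nat).
 unfold lo, hi. replace (j + K)%nat with (j - K + S (2*K - 1))%nat by lia.
 eapply Rle_trans. apply blocks; auto. replace (S (2*K-1)) with (2*K)%nat by lia.
 apply ssum_le. intros i _. unfold yb. unfold Rdiv. rewrite Rmult_comm, <- ssum_scal.
 apply ssum_le. intros m _. unfold g. rewrite Rmult_comm. apply Rmult_le_compat_r. apply Rabs_pos.
 apply Rinv_le_contravar. apply p2_pos. rewrite <- INR_pw. apply le_INR. lia.
Qed.


Lemma BI a j E : (forall t, (t <= pw j)%nat -> Rabs (ssum (fun i => a (pw j + i)%nat) (S t)) <= E) ->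
  (yb a j)^2 <= E * (yb a j + 2 * INR (S (pw j)) * Vb a j).
Proof. intros H. set (p := pw j) in *.
 assert (HE : 0 <= E) by (eapply Rle_trans; [apply Rabs_pos|apply (H 0%nat); lia]).
 assert (Hab := abel_bound (fun i => a (p+i)%nat) (fun i => a (p+i)%nat) p E H). cbv beta in Hab.
 set (W := ssum (fun m => Rabs (a (p + S m)%nat - a (p + m)%nat)) p) in *.
 assert (HW : W <= Vb a j).
 { unfold Vb. fold p. simpl ssum. unfold W.
   assert (0 <= Rabs (a (p + p)%nat - a (S (p + p)))) by apply Rabs_pos.
   rewrite (ssum_ext (fun m => Rabs (a (p + S m)%nat - a (p + m)%nat)) (fun i => Rabs (a (p + i)%nat - a (S (p + i))))). lra.
   intros i _. rewrite Rabs_minus_sym. do 3 f_equal. lia. }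
 assert (HW0 : 0 <= W) by (apply ssum_nonneg; intros; apply Rabs_pos).
 assert (Hcs := cs_sum (fun i => Rabs (a (p+i)%nat)) (S p)). cbv beta in Hcs.
 replace (ssum (fun i => Rabs (a (p + i)%nat) ^ 2) (S p)) with (Rabs (ssum (fun m => a (p + m)%nat * a (p + m)%nat) (S p))) in Hcs.
 2:{ rewrite Rabs_right. apply ssum_ext. intros i _. rewrite pow2_abs. ring.
     apply Rle_ge, ssum_nonneg. intros; apply Rle_0_sqr. }
 assert (Hend : INR (S p) * Rabs (a (p + p)%nat) <= yb a j + INR (S p) * W).
 { rewrite <- (ssum_const (Rabs (a (p + p)%nat)) (S p)), <- (ssum_const W (S p)). unfold yb. fold p. rewrite <- ssum_plus.
   apply ssum_le. intros m Hm.
   assert (Hd := diff_le_var (fun i => a (p+i)%nat) p m ltac:(lia)). cbv beta in Hd. fold W in Hd.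
   replace (a (p+p)%nat) with (a (p + m)%nat + (a (p+p)%nat - a (p+m)%nat)) by ring.
   eapply Rle_trans. apply Rabs_triang. lra. }
 assert (HS : 0 <= INR (S p)) by apply pos_INR.
 assert (yb a j ^ 2 <= INR (S p) * (E * (Rabs (a (p + p)%nat) + W))) by
   (eapply Rle_trans; [exact Hcs|]; apply Rmult_le_compat_l; auto).
 assert (INR (S p) * (E * (Rabs (a (p + p)%nat) + W)) = E * (INR (S p) * Rabs (a (p + p)%nat) + INR (S p) * W)) by ring.
 assert (E * (INR (S p) * Rabs (a (p + p)%nat) + INR (S p) * W) <= E * (yb a j + 2 * INR (S p) * Vb a j)).
 { apply Rmult_le_compat_l; auto. nra. }
 lra.
Qed.


Lemma argmax (f : nat -> R) n : (0 < n)%nat -> exists i, (i < n)%nat /\ forall k, (k < n)%nat -> f k <= f i.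
Proof. induction n; intros Hn. lia. destruct n. exists 0%nat. split. lia. intros k Hk. replace k with 0%nat by lia. lra.
 destruct (IHn ltac:(lia)) as [i [Hi Hk]]. destruct (Rle_dec (f i) (f (S n))).
 - exists (S n). split. lia. intros k Hk2. destruct (Nat.eq_dec k (S n)). subst; lra. specialize (Hk k ltac:(lia)). lra.
 - exists i. split. lia. intros k Hk2. destruct (Nat.eq_dec k (S n)). subst; lra. apply Hk; lia. Qed.

Definition Dc (C : R) (K : nat) := 1 + 8 * C * INR K * 2 ^ K.

Lemma Ystep a C lam K j E : 0 < C -> 1 < lam -> lam <= 2^K -> (1 <= K)%nat -> (K <= j)%nat ->
  GMhyp a C lam ->
  (forall t, (t <= pw j)%nat -> Rabs (ssum (fun i => a (pw j + i)%nat) (S t)) <= E) ->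
  exists i, (j - K <= i)%nat /\ (i < j + K)%nat /\ (yb a j)^2 <= E * Dc C K * yb a i.
Proof. intros HC Hl HlK HK1 HKj HG H.
 assert (HE : 0 <= E) by (eapply Rle_trans; [apply Rabs_pos|apply (H 0%nat); lia]).
 assert (Hbi := BI a j E H).
 assert (Hv := GMj a C lam K j HC Hl HlK HK1 HKj HG).
 destruct (argmax (fun r => yb a (j - K + r)%nat) (2*K) ltac:(lia)) as [r [Hr Hmax]].
 exists (j - K + r)%nat. split. lia. split. lia.
 set (Y := yb a (j - K + r)%nat) in *.
 assert (Hyj : yb a j <= Y) by (specialize (Hmax K ltac:(lia)); cbv beta in Hmax; replace (j - K + K)%nat with j in Hmax by lia; exact Hmax).
 set (q := 2 ^ (j - K)). set (Q := 2 ^ K).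
 assert (Hq : 0 < q) by apply p2_pos. assert (HQ : 0 < Q) by apply p2_pos.
 set (Z := ssum (fun i => yb a (j - K + i)%nat / 2 ^ (j - K + i)) (2 * K)) in *.
 assert (HZ : Z * q <= 2 * INR K * Y).
 { unfold Z. rewrite Rmult_comm, <- ssum_scal. replace (2 * INR K * Y) with (INR (2*K) * Y) by (rewrite mult_INR; simpl; ring).
   rewrite <- ssum_const. apply ssum_le. intros i Hi. specialize (Hmax i Hi). cbv beta in Hmax.
   rewrite pow_add. fold q. assert (1 <= 2 ^ i) by (apply pow_R1_Rle; lra).
   assert (0 <= yb a (j - K + i)%nat) by apply yb_nonneg.
   unfold Rdiv. rewrite Rinv_mult. 
   replace (q * (yb a (j - K + i)%nat * (/ q * / 2 ^ i))) with (yb a (j - K + i)%nat * / 2 ^ i) by (field; lra).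
   apply (Rmult_le_reg_r (2^i)). lra. rewrite Rmult_assoc, Rinv_l by lra. nra. }
 assert (HS : INR (S (pw j)) <= 2 * (q * Q)).
 { rewrite S_INR, INR_pw. unfold q, Q. rewrite <- pow_add. replace (j - K + K)%nat with j by lia.
   assert (1 <= 2^j) by (apply pow_R1_Rle; lra). lra. }
 assert (HZ0 : 0 <= Z) by (apply ssum_nonneg; intros; apply Rmult_le_pos; [apply yb_nonneg| apply Rlt_le, Rinv_0_lt_compat, p2_pos]).
 assert (HV0 := Vb_nonneg a j). assert (HS0 := pos_INR (S (pw j))).
 assert (H2 : 2 * INR (S (pw j)) * Vb a j <= 8 * C * INR K * Q * Y).
 { apply Rle_trans with (2 * (2 * (q * Q)) * (C * Z)). apply Rmult_le_compat; nra.
   replace (2 * (2 * (q * Q)) * (C * Z)) with (4 * C * Q * (Z * q)) by ring.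
   replace (8 * C * INR K * Q * Y) with (4 * C * Q * (2 * INR K * Y)) by ring.
   apply Rmult_le_compat_l. nra. auto. }
 assert (HY0 : 0 <= yb a j) by apply yb_nonneg.
 eapply Rle_trans. exact Hbi. unfold Dc. fold Q.
 replace (E * (1 + 8 * C * INR K * Q) * Y) with (E * (Y + 8 * C * INR K * Q * Y)) by ring.
 apply Rmult_le_compat_l; auto. lra.
Qed.


Lemma INR_lt_pow n : INR n < 2 ^ n.
Proof. induction n. simpl; lra. rewrite S_INR. simpl. assert (1 <= 2^n) by (apply pow_R1_Rle; lra). lra. Qed.

Lemma exists_nat_gt (B : R) : exists n, B < INR n.
Proof. destruct (archimed B) as [H1 H2]. destruct (Z_lt_le_dec (up B) 0).
 - exists 0%nat. simpl. apply IZR_lt in l. lra.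
 - exists (Z.to_nat (up B)). rewrite INR_IZR_INZ, Z2Nat.id by lia. lra. Qed.

Lemma exists_pow_gt (B : R) : exists t, B < 2 ^ t.
Proof. destruct (exists_nat_gt B) as [n Hn]. exists n. assert (H := INR_lt_pow n). lra. Qed.

Lemma bdd_abstract (y : nat -> R) (J0 K : nat) (B G : R) :
  (forall i, 0 <= y i) -> 0 < B -> (forall i, y i <= 2^(i+1) * B) -> 1 <= G ->
  (forall i, (i < J0)%nat -> y i <= G) ->
  (forall j, (J0 <= j)%nat -> exists i, (i < j + K)%nat /\ (y j)^2 <= / 2^(K+1) * y i) ->
  forall j, y j <= G.
Proof. intros Hy0 HB Hyb HG HJ0 Hstep j. destruct (Rle_dec (y j) G) as [|Hn]; auto. exfalso. apply Rnot_le_lt in Hn.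
 assert (HK : 1 <= 2^(K+1)) by (apply pow_R1_Rle; lra).
 assert (Hc : forall s, exists i, (i <= j + s*K)%nat /\ y j * (2^(K+1))^s <= y i).
 { induction s. exists j. split. lia. simpl. lra.
   destruct IHs as [i [Hi Hyi]].
   assert (1 <= (2^(K+1))^s) by (apply pow_R1_Rle; lra).
   assert (Hyi1 : y j <= y i) by nra.
   assert (HiJ : (J0 <= i)%nat). { destruct (Nat.lt_ge_cases i J0); auto. specialize (HJ0 i H0). lra. }
   destruct (Hstep i HiJ) as [i' [Hi' Hst]]. exists i'. split. lia.
   assert (Hp : 0 < 2^(K+1)) by lra.
   assert (y i' >= 2^(K+1) * (y i)^2).
   { apply Rle_ge. apply (Rmult_le_reg_l (/ 2^(K+1))). apply Rinv_0_lt_compat; lra.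
     rewrite <- Rmult_assoc, Rinv_l by lra. lra. }
   rewrite <- tech_pow_Rmult. set (X := 2^(K+1)) in *. assert (1 <= y i) by lra. assert (X * y i <= X * (y i)^2) by (apply Rmult_le_compat_l; nra). assert (X * (y j * X^s) <= X * y i) by (apply Rmult_le_compat_l; lra). nra. }
 destruct (exists_pow_gt B) as [t Ht].
 destruct (Hc (j + 1 + t)%nat) as [i [Hi Hyi]].
 assert (H1 := Hyb i).
 assert (Hmono : 2 ^ (i+1) <= 2 ^ (j + (j+1+t)*K + 1)) by (apply Rle_pow; [lra|lia]).
 rewrite <- pow_mult in Hyi.
 replace ((K+1) * (j+1+t))%nat with ((j+1+t)*K + (j + 1) + t)%nat in Hyi by lia.
 replace (j + (j+1+t)*K + 1)%nat with ((j+1+t)*K + (j+1))%nat in Hmono by lia.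
 rewrite (pow_add 2 ((j+1+t)*K + (j+1)) t), (pow_add 2 ((j+1+t)*K) (j+1)) in Hyi.
 rewrite (pow_add 2 ((j+1+t)*K) (j+1)) in Hmono.
 set (P := 2 ^ ((j+1+t)*K)) in *. set (P2 := 2 ^ (j+1)) in *.
 assert (0 < P) by apply p2_pos. assert (0 < P2) by apply p2_pos.
 assert (y j * (P * P2 * 2 ^ t) <= P * P2 * B).
 { eapply Rle_trans. exact Hyi. eapply Rle_trans. exact H1. apply Rmult_le_compat_r; lra. }
 assert (P * P2 * B < P * P2 * 2 ^ t) by (apply Rmult_lt_compat_l; nra).
 assert (0 < 2 ^ t) by apply p2_pos.
 set (Z := P * P2 * 2 ^ t) in *. assert (0 < Z) by (unfold Z; apply Rmult_lt_0_compat; [apply Rmult_lt_0_compat|]; lra).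
 assert (Z <= y j * Z) by (rewrite <- (Rmult_1_l Z) at 1; apply Rmult_le_compat_r; lra).
 lra.
Qed.

Lemma y_to_0 a C lam K : 0 < C -> 1 < lam -> lam <= 2^K -> (1 <= K)%nat -> GMhyp a C lam ->
  is_lim_seq a 0 -> ex_series a -> forall eta, 0 < eta -> exists J, forall j, (J <= j)%nat -> yb a j <= eta.
Proof. intros HC Hl HlK HK1 HG Ha0 Hs.
 assert (HD : 1 <= Dc C K).
 { unfold Dc. assert (0 <= INR K) by apply pos_INR. assert (0 < 2^K) by apply p2_pos.
   assert (0 <= C * INR K) by nra. assert (0 <= C * INR K * 2^K) by nra. lra. }
 destruct (bounded_seq a Ha0) as [B [HB Hab]].
 assert (Hyb : forall i, yb a i <= 2^(i+1) * B).
 { intros i. unfold yb. eapply Rle_trans. apply (ssum_le _ (fun _ => B)). intros; apply Hab.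
   rewrite ssum_const, S_INR, INR_pw, pow_add. assert (1 <= 2^i) by (apply pow_R1_Rle; lra). simpl. nra. }
 assert (Hcy : forall E, 0 < E -> exists J, forall j, (J <= j)%nat -> exists i, (i < j + K)%nat /\ (yb a j)^2 <= E * Dc C K * yb a i).
 { intros E HE. destruct (CauchyA a Hs E HE) as [M HM]. exists (M + K)%nat. intros j Hj.
   destruct (Ystep a C lam K j E HC Hl HlK HK1 ltac:(lia) HG) as [i [_ [Hi Hy]]].
   { intros t Ht. apply HM. assert (H := pw_gt j). lia. }
   exists i; split; auto. }
 set (D := Dc C K) in *.
 destruct (Hcy (/ 2^(K+1) / D)) as [J0 HJ0].
 { apply Rdiv_lt_0_compat. apply Rinv_0_lt_compat, p2_pos. lra. }
 set (G := 1 + ssum (yb a) J0).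
 assert (HGb : forall j, yb a j <= G).
 { apply (bdd_abstract (yb a) J0 K B G); auto. apply yb_nonneg.
   unfold G. assert (0 <= ssum (yb a) J0) by (apply ssum_nonneg; intros; apply yb_nonneg). lra.
   intros i Hi. unfold G. assert (yb a i <= ssum (yb a) J0) by (apply ssum_term; auto; apply yb_nonneg). lra.
   intros j Hj. destruct (HJ0 j Hj) as [i [Hi Hy]]. exists i. split; auto.
   unfold Rdiv in Hy. rewrite (Rmult_assoc (/ 2 ^ (K+1))), Rinv_l, Rmult_1_r in Hy by lra. exact Hy. }
 assert (HG1 : 1 <= G) by (specialize (HGb 0%nat); assert (H := yb_nonneg a 0); unfold G in *;
   assert (0 <= ssum (yb a) J0) by (apply ssum_nonneg; intros; apply yb_nonneg); lra).
 intros eta Heta.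
 destruct (Hcy (eta^2 / (D * G))) as [J HJ].
 { apply Rdiv_lt_0_compat. nra. nra. }
 exists J. intros j Hj. destruct (HJ j Hj) as [i [_ Hy]].
 assert (Hyi := HGb i). assert (Hy0 := yb_nonneg a i). assert (Hyj0 := yb_nonneg a j).
 assert (eta ^ 2 / (D * G) * D * yb a i <= eta^2).
 { replace (eta ^ 2 / (D * G) * D * yb a i) with (eta^2 * (yb a i / G)) by (field; lra).
   assert (yb a i / G <= 1). { apply (Rmult_le_reg_r G). lra. unfold Rdiv. rewrite Rmult_assoc, Rinv_l by lra. lra. }
   assert (0 <= eta^2) by nra. nra. }
 nra.
Qed.


Definition Dn (a : nat -> R) n := ssum (fun k => Rabs (a (S k) - a k)) n.

Lemma Dn_mono a n m : (n <= m)%nat -> Dn a n <= Dn a m.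
Proof. intros; apply ssum_mono; auto; intros; apply Rabs_pos. Qed.

Lemma Dn_diff a n m : (n <= m)%nat -> Dn a m - Dn a n = ssum (fun i => Rabs (a (n + S i)%nat - a (n + i)%nat)) (m - n).
Proof. intros H. unfold Dn. rewrite ssum_diff by auto. apply ssum_ext. intros i _. do 3 f_equal. lia. Qed.

Lemma absdiff_Dn a n N : (n <= N)%nat -> Rabs (a N - a n) <= Dn a N - Dn a n.
Proof. intros H. rewrite Dn_diff by auto. assert (Hd := diff_le_var (fun i => a (n+i)%nat) (N - n) 0 ltac:(lia)).
 cbv beta in Hd. replace (n + (N - n))%nat with N in Hd by lia. rewrite Nat.add_0_r in Hd. exact Hd. Qed.

Lemma Dn_block a c : Dn a (pw (S c)) - Dn a (pw c) <= Vb a c.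
Proof. rewrite Dn_diff by (rewrite pw_S; lia). rewrite pw_S. replace (pw c + pw c - pw c)%nat with (pw c) by lia.
 unfold Vb. simpl ssum. assert (0 <= Rabs (a (pw c + pw c)%nat - a (S (pw c + pw c)))) by apply Rabs_pos.
 rewrite (ssum_ext (fun i => Rabs (a (pw c + S i)%nat - a (pw c + i)%nat)) (fun i => Rabs (a (pw c + i)%nat - a (S (pw c + i))))). lra.
 intros i _. rewrite Rabs_minus_sym. do 3 f_equal. lia. Qed.

Lemma Dn_blocks a j0 r : Dn a (pw (j0 + r)) - Dn a (pw j0) <= ssum (fun i => Vb a (j0 + i)%nat) r.
Proof. induction r. rewrite Nat.add_0_r. simpl. lra. simpl ssum.
 assert (H := Dn_block a (j0 + r)). replace (j0 + S r)%nat with (S (j0 + r)) by lia. lra. Qed.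

Lemma geom j0 r : ssum (fun i => / 2 ^ (j0 + i)) r + 2 / 2 ^ (j0 + r) = 2 / 2 ^ j0.
Proof. induction r. rewrite Nat.add_0_r. simpl; ring. simpl ssum.
 replace (j0 + S r)%nat with (S (j0 + r)) by lia. simpl pow.
 assert (0 < 2 ^ (j0 + r)) by apply p2_pos. rewrite <- IHr. field. lra. Qed.

Lemma V_small a C lam K Jy eta j : 0 < C -> 1 < lam -> lam <= 2^K -> (1 <= K)%nat -> GMhyp a C lam ->
  (forall i, (Jy <= i)%nat -> yb a i <= eta) -> (Jy + K <= j)%nat ->
  Vb a j <= 2 * C * INR K * eta * 2 ^ K / 2 ^ j.
Proof. intros HC Hl HlK HK1 HG Hy Hj.
 eapply Rle_trans. apply (GMj a C lam K j); auto; lia.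
 assert (Hq : 0 < 2 ^ (j-K)) by apply p2_pos.
 assert (H2 : 2 ^ j = 2 ^ (j-K) * 2^K) by (rewrite <- pow_add; f_equal; lia).
 eapply Rle_trans. apply Rmult_le_compat_l. lra.
 apply (ssum_le _ (fun _ => eta / 2 ^ (j-K))). intros i Hi. unfold Rdiv.
 assert (0 <= yb a (j - K + i)%nat) by apply yb_nonneg.
 apply Rmult_le_compat. auto. apply Rlt_le, Rinv_0_lt_compat, p2_pos. apply Hy. lia.
 apply Rinv_le_contravar. auto. rewrite pow_add. assert (1 <= 2^i) by (apply pow_R1_Rle; lra). nra.
 rewrite ssum_const, mult_INR, H2. simpl INR. assert (0 < 2^K) by apply p2_pos. right. field. lra.
Qed.

Lemma KL a C lam K : 0 < C -> 1 < lam -> lam <= 2^K -> (1 <= K)%nat -> GMhyp a C lam ->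
  is_lim_seq a 0 -> ex_series a ->
  forall eps, 0 < eps -> exists M, forall p L, (M <= p)%nat ->
   INR p * (Rabs (a (p+L)%nat) + ssum (fun m => Rabs (a (p + S m)%nat - a (p + m)%nat)) L) <= eps.
Proof. intros HC Hl HlK HK1 HG Ha0 Hs eps Heps.
 set (A := 4 * C * INR K * 2 ^ K).
 assert (HA : 0 <= A) by (unfold A; assert (0 <= INR K) by apply pos_INR; assert (0 < 2^K) by apply p2_pos;
   apply Rmult_le_pos; [|lra]; nra).
 set (eta := eps / (2 * (1 + A))).
 assert (Heta : 0 < eta) by (unfold eta; apply Rdiv_lt_0_compat; lra).
 destruct (y_to_0 a C lam K HC Hl HlK HK1 HG Ha0 Hs eta Heta) as [Jy HJy].
 exists (pw (Jy + K)). intros p L Hp.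
 assert (Hp0 : (0 < p)%nat) by (assert (H := pw_pos (Jy+K)); lia).
 destruct (Nat.log2_spec p Hp0) as [Hlo Hhi]. set (j0 := Nat.log2 p) in *.
 assert (Hj0 : (Jy + K <= j0)%nat).
 { destruct (Nat.le_gt_cases (Jy + K) j0); auto. assert (H1 := pw_mono (S j0) (Jy + K) ltac:(lia)).
   unfold pw in H1, Hp. lia. }
 assert (HP : INR p < 2 * 2 ^ j0).
 { apply lt_INR in Hhi. rewrite pow_INR in Hhi. simpl INR in Hhi. replace (1+1) with 2 in Hhi by ring. simpl in Hhi. exact Hhi. }
 assert (HP0 : 0 <= INR p) by apply pos_INR.
 assert (Hq : 0 < 2 ^ j0) by apply p2_pos.
 apply is_lim_seq_spec in Ha0. destruct (Ha0 (mkposreal (eta / 2 ^ j0) ltac:(apply Rdiv_lt_0_compat; lra))) as [N0 HN0].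
 simpl in HN0.
 set (r := (p + L + N0)%nat). set (N := pw (j0 + r)).
 assert (HN : (p + L + N0 <= N)%nat) by (unfold N; assert (H := pw_gt (j0 + r)); unfold r in *; lia).
 assert (HaN : Rabs (a N) <= eta / 2 ^ j0) by (specialize (HN0 N ltac:(lia)); rewrite Rminus_0_r in HN0; lra).
 replace (ssum (fun m => Rabs (a (p + S m)%nat - a (p + m)%nat)) L) with (Dn a (p + L) - Dn a p)
   by (rewrite Dn_diff by lia; f_equal; lia).
 assert (H1 : Rabs (a (p + L)%nat) <= Rabs (a N) + (Dn a N - Dn a (p + L))).
 { assert (H := absdiff_Dn a (p+L) N ltac:(lia)).
   replace (a (p+L)%nat) with (a N - (a N - a (p+L)%nat)) by ring. eapply Rle_trans. apply Rabs_sub_le. lra. }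
 assert (H2 : Dn a N - Dn a p <= Dn a N - Dn a (pw j0)) by (assert (H := Dn_mono a (pw j0) p Hlo); lra).
 assert (H3 : Dn a N - Dn a (pw j0) <= A * eta / 2 ^ j0).
 { eapply Rle_trans. apply Dn_blocks. eapply Rle_trans.
   apply (ssum_le _ (fun i => 2 * C * INR K * eta * 2 ^ K * / 2 ^ (j0 + i))). intros i _.
   apply (V_small a C lam K Jy); auto. lia.
   rewrite ssum_scal. assert (Hg := geom j0 r). assert (0 < 2 ^ (j0 + r)) by apply p2_pos.
   assert (ssum (fun i => / 2 ^ (j0 + i)) r <= 2 / 2 ^ j0).
   { assert (0 <= 2 / 2 ^ (j0 + r)) by (apply Rlt_le, Rdiv_lt_0_compat; lra). lra. }
   assert (0 <= 2 * C * INR K * eta * 2 ^ K).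
   { assert (0 <= INR K) by apply pos_INR. assert (0 < 2^K) by apply p2_pos.
     apply Rmult_le_pos; [|lra]. apply Rmult_le_pos; [|lra]. nra. }
   eapply Rle_trans. apply Rmult_le_compat_l. auto. exact H0.
   unfold A. right. field. lra. }
 assert (HX : Rabs (a (p + L)%nat) + (Dn a (p + L) - Dn a p) <= (1 + A) * eta / 2 ^ j0).
 { replace ((1 + A) * eta / 2 ^ j0) with (eta / 2 ^ j0 + A * eta / 2 ^ j0) by (field; lra). lra. }
 assert (HX0 : 0 <= Rabs (a (p + L)%nat) + (Dn a (p + L) - Dn a p)).
 { assert (H := Dn_mono a p (p+L) ltac:(lia)). assert (0 <= Rabs (a (p+L)%nat)) by apply Rabs_pos. lra. }
 eapply Rle_trans. apply Rmult_le_compat_l. auto. exact HX.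
 apply Rle_trans with (2 * 2 ^ j0 * ((1 + A) * eta / 2 ^ j0)).
 apply Rmult_le_compat_r. apply Rmult_le_pos. apply Rmult_le_pos; lra. apply Rlt_le, Rinv_0_lt_compat; lra. lra.
 unfold eta. right. field. split; lra.
Qed.


Lemma Low a x q c E : (forall m, Rabs (ssum (fun i => a (q+i)%nat) m) <= E) ->
  Rabs (ssum (fun i => a (q+i)%nat * cos (INR (q+i) * x)) c) <= E * (1 + 2 * Rabs (sin (x/2)) * INR c).
Proof. intros H. assert (HE : 0 <= E) by (eapply Rle_trans; [apply Rabs_pos| apply (H 0%nat)]).
 assert (Hs := Rabs_pos (sin (x/2))).
 destruct c as [|L]. simpl. rewrite Rabs_R0. nra.
 eapply Rle_trans. apply (abel_bound (fun i => a (q+i)%nat) (fun i => cos (INR (q+i) * x)) L E). intros; apply H.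
 apply Rmult_le_compat_l; auto.
 assert (Rabs (cos (INR (q + L) * x)) <= 1) by apply Rabs_le, COS_bound.
 assert (ssum (fun m => Rabs (cos (INR (q + S m) * x) - cos (INR (q + m) * x))) L <= INR L * (2 * Rabs (sin (x/2)))).
 { rewrite <- ssum_const. apply ssum_le. intros i _. replace (q + S i)%nat with (S (q + i)) by lia. apply cos_step. }
 rewrite S_INR. nra. Qed.

Lemma UC_main (a : nat -> R) (Ha : GMS a) (Hs : ex_series a) :
  forall eps, 0 < eps -> exists M, forall x p m, (M <= p)%nat ->
   Rabs (ssum (fun i => a (p+i)%nat * cos (INR (p+i) * x)) m) <= eps.
Proof. intros eps Heps. destruct Ha as [Ha0 [C [lam [HC [Hl HG]]]]].
 destruct (exists_nat_gt lam) as [n0 Hn0]. set (K := S n0).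
 assert (HlK : lam <= 2 ^ K) by (assert (H := INR_lt_pow K); unfold K in *; rewrite S_INR in H; lra).
 destruct (CauchyA a Hs (eps/10) ltac:(lra)) as [M1 HM1].
 destruct (KL a C lam K ltac:(lra) Hl HlK ltac:(unfold K; lia) HG Ha0 Hs (eps/2) ltac:(lra)) as [M2 HM2].
 exists (M1 + M2)%nat. intros x p m Hp.
 set (s := Rabs (sin (x/2))). assert (Hs0 : 0 <= s) by apply Rabs_pos.
 assert (Hs1 : s <= 1) by (apply Rabs_le, SIN_bound).
 assert (HL : forall q c, (M1 <= q)%nat -> Rabs (ssum (fun i => a (q+i)%nat * cos (INR (q+i) * x)) c) <= eps/10 * (1 + 2 * s * INR c)).
 { intros q c Hq. apply Low. intros; apply HM1; auto. }
 destruct (Req_dec s 0) as [Hs00|Hsp].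
 - specialize (HL p m ltac:(lia)). rewrite Hs00 in HL. lra.
 - assert (Hsp' : 0 < s) by lra.
   destruct (archimed (/ s)) as [Hu1 Hu2].
   assert (Hinv : 0 < / s) by (apply Rinv_0_lt_compat; lra).
   set (z := Z.to_nat (up (/ s))).
   assert (Hz : INR z = IZR (up (/ s))).
   { unfold z. rewrite INR_IZR_INZ, Z2Nat.id; auto. apply le_IZR. lra. }
   set (c := Nat.min m z).
   assert (Hcz : (c <= z)%nat) by lia.
   replace m with (c + (m - c))%nat by lia. rewrite ssum_split.
   eapply Rle_trans. apply Rabs_triang.
   assert (Hlow : Rabs (ssum (fun i => a (p + i)%nat * cos (INR (p + i) * x)) c) <= eps / 2).
   { eapply Rle_trans. apply HL. lia. apply le_INR in Hcz. 
     assert (s * INR c <= s * (/ s + 1)) by (apply Rmult_le_compat_l; lra).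
     assert (s * / s = 1) by (field; lra). nra. }
   assert (Hhigh : Rabs (ssum (fun i => a (p + (c + i))%nat * cos (INR (p + (c + i)) * x)) (m - c)) <= eps / 2).
   { destruct (m - c)%nat as [|L'] eqn:Em. simpl. rewrite Rabs_R0. lra.
     assert (Hc : c = z) by lia.
     set (q := (p + c)%nat).
     rewrite (ssum_ext _ (fun i => cos (INR (q + i) * x) * a (q + i)%nat)).
     2:{ intros i _. unfold q. rewrite Nat.add_assoc. ring. }
     eapply Rle_trans. apply (abel_bound (fun i => cos (INR (q + i) * x)) (fun i => a (q + i)%nat) L' (/ s)).
     { intros t _. apply dirichlet. exact Hsp'. }
     set (X := Rabs (a (q + L')%nat) + ssum (fun m0 => Rabs (a (q + S m0)%nat - a (q + m0)%nat)) L').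
     assert (HX0 : 0 <= X) by (unfold X; assert (0 <= ssum (fun m0 => Rabs (a (q + S m0)%nat - a (q + m0)%nat)) L')
        by (apply ssum_nonneg; intros; apply Rabs_pos); assert (0 <= Rabs (a (q+L')%nat)) by apply Rabs_pos; lra).
     assert (HqX := HM2 q L' ltac:(unfold q; lia)). fold X in HqX.
     assert (Hq : / s <= INR q) by (unfold q; rewrite plus_INR, Hc, Hz; assert (0 <= INR p) by apply pos_INR; lra).
     assert (/ s * X <= INR q * X) by (apply Rmult_le_compat_r; auto). lra. }
   lra.
Qed.



Lemma cp_ssum a N x : cos_partial a N x = ssum (fun n => a n * cos (INR n * x)) (S N).
Proof. unfold cos_partial. rewrite ssum_sumf. auto. Qed.

Theorem theorem3 (a : nat -> R) (Ha : GMS a) :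
  (* (i) <-> (ii) *)
  (ex_series a <->
   exists f : R -> R, forall eps : R, 0 < eps ->
     exists N0 : nat, forall N : nat, (N0 <= N)%nat ->
       forall x : R, Rabs (cos_partial a N x - f x) < eps)
  /\
  (* (ii) <-> (iii) *)
  ((exists f : R -> R, forall eps : R, 0 < eps ->
     exists N0 : nat, forall N : nat, (N0 <= N)%nat ->
       forall x : R, Rabs (cos_partial a N x - f x) < eps) <->
   ((forall x : R, ex_series (fun n => a n * cos (INR n * x))) /\
    exists M : R, forall x : R,
      Rabs (Series (fun n => a n * cos (INR n * x))) <= M)).
Proof.
  assert (H1 : ex_series a -> exists f : R -> R, forall eps : R, 0 < eps ->
     exists N0 : nat, forall N : nat, (N0 <= N)%nat ->
       forall x : R, Rabs (cos_partial a N x - f x) < eps).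
  { intros Hs. destruct (from_UC (fun x n => a n * cos (INR n * x)) (UC_main a Ha Hs)) as [f Hf].
    exists f. intros eps He. destruct (Hf eps He) as [N0 HN]. exists N0. intros N HN0 x.
    rewrite cp_ssum. apply HN; auto. }
  assert (Hser : forall f : R -> R, (forall eps : R, 0 < eps ->
     exists N0 : nat, forall N : nat, (N0 <= N)%nat ->
       forall x : R, Rabs (cos_partial a N x - f x) < eps) ->
     forall x, is_series (fun n => a n * cos (INR n * x)) (f x)).
  { intros f Hf x. apply lim_of_eps. intros eps He. destruct (Hf eps He) as [N0 HN].
    exists N0. intros N HN0. rewrite sum_n_Reals. apply (HN N HN0 x). }
  assert (H0 : (forall x, ex_series (fun n => a n * cos (INR n * x))) -> ex_series a).
  { intros H. destruct (H 0) as [l Hl]. exists l. eapply is_series_ext; [|exact Hl].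
    intros n. simpl. rewrite Rmult_0_r, cos_0. ring. }
  split; [split|split].
  - exact H1.
  - intros [f Hf]. apply H0. intros x. exists (f x). apply Hser; auto.
  - intros [f Hf]. split. intros x. exists (f x). apply Hser; auto.
    destruct (Hf 1 Rlt_0_1) as [N0 HN].
    exists (ssum (fun n => Rabs (a n)) (S N0) + 1). intros x.
    rewrite (is_series_unique _ _ (Hser f Hf x)).
    specialize (HN N0 (Nat.le_refl _) x). rewrite cp_ssum in HN.
    assert (Rabs (ssum (fun n => a n * cos (INR n * x)) (S N0)) <= ssum (fun n => Rabs (a n)) (S N0)).
    { eapply Rle_trans. apply ssum_abs. apply ssum_le. intros i _. rewrite Rabs_mult.
      assert (Rabs (cos (INR i * x)) <= 1) by apply Rabs_le, COS_bound.
      assert (0 <= Rabs (a i)) by apply Rabs_pos. nra. }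
    assert (Rabs (f x) <= Rabs (ssum (fun n => a n * cos (INR n * x)) (S N0)) + Rabs (ssum (fun n => a n * cos (INR n * x)) (S N0) - f x)).
    { replace (f x) with (ssum (fun n => a n * cos (INR n * x)) (S N0) - (ssum (fun n => a n * cos (INR n * x)) (S N0) - f x)) at 1 by ring.
      apply Rabs_sub_le. }
    lra.
  - intros [H _]. apply H1, H0, H.
Qed.
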